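(* For fixed integers $n\ge m\ge 3$, the maximal $h$-vector $h_{max}$ of Perazzo algebras with invariants $n,m,d$ is not unimodal for all sufficiently large $d$.
   Context: $K$ algebraically closed of characteristic zero. A Perazzo form of degree $d$ is $F=X_0p_0+\dots+X_np_n+G\in K[X_0,\dots,X_n,U_1,\dots,U_m]_d$ with $p_i\in K[U_1,\dots,U_m]_{d-1}$ algebraically dependent but linearly independent, $G\in K[U_1,\dots,U_m]_d$. The maximal $h$-vector is $h_{max}=(h_0,\dots,h_d)$, symmetric, with $h_i=\min\{\alpha_i+\beta_i,\alpha_i+\gamma_i\}$ for $0\le i\le\lfloor d/2\rfloor$, where $\alpha_i=\binom{m+i-1}{m-1}$, $\beta_i=\binom{d+m-i-1}{m-1}$, $\gamma_i=(n+1)\binom{m+i-2}{m-1}$. Unimodal means $h_0\le\dots\le h_k\ge\dots\ge h_d$ for some $k$. *)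

(* Defs.v *)
From mathcomp Require Import all_boot.
Set Implicit Arguments. Unset Strict Implicit. Unset Printing Implicit Defensive.

Definition perazzo_alpha (m i : nat) : nat := 'C(m + i - 1, m - 1).
Definition perazzo_beta (m d i : nat) : nat := 'C(d + m - i - 1, m - 1).
Definition perazzo_gamma (n m i : nat) : nat := (n + 1) * 'C(m + i - 2, m - 1).

Definition hmax_low (n m d i : nat) : nat :=
  minn (perazzo_alpha m i + perazzo_beta m d i)
       (perazzo_alpha m i + perazzo_gamma n m i).

Definition hmax (n m d i : nat) : nat :=
  if i <= d./2 then hmax_low n m d i else hmax_low n m d (d - i).

Definition unimodal (h : nat -> nat) (d : nat) : Prop :=
  exists k, k <= d /\
    (forall i, i < k -> h i <= h i.+1) /\
    (forall i, k <= i -> i < d -> h i.+1 <= h i).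

(* Main.v *)
Require Import Defs.
From mathcomp Require Import all_boot.
From mathcomp Require Import zify.

Lemma bin_step y k : 5 * k <= y.+1 -> 4 * 'C(y.+1, k) <= 5 * 'C(y, k).
Proof.
move=> hk.
have E := mul_bin_down y.+1 k; rewrite /= in E.
have pos : 0 < y.+1 - k by lia.
rewrite -(leq_pmul2l pos) mulnCA -E mulnCA.
rewrite !mulnA; apply: leq_mul => //; lia.
Qed.

Lemma bin_step4 y k : 5 * k <= y.+1 -> 'C(y + 4, k) <= 4 * 'C(y, k).
Proof.
move=> hk.
have h1 := @bin_step y k hk.
have h2 : 4 * 'C(y.+2, k) <= 5 * 'C(y.+1, k) by apply: bin_step; lia.
have h3 : 4 * 'C(y.+3, k) <= 5 * 'C(y.+2, k) by apply: bin_step; lia.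
have h4 : 4 * 'C(y.+4, k) <= 5 * 'C(y.+3, k) by apply: bin_step; lia.
rewrite addn4. lia.
Qed.

Lemma bin_lt x y r : x < y -> 0 < r -> r.-1 <= x -> 'C(x, r) < 'C(y, r).
Proof.
move=> xy r0 rx.
apply: (@leq_trans 'C(x.+1, r)); last exact: leq_bin2l.
case: r r0 rx => // r _ /= rx.
rewrite binS -addn1 leq_add2l bin_gt0 //.
Qed.

Lemma chain_down (f : nat -> nat) b c d :
  (forall i, b <= i -> i < d -> f i.+1 <= f i) -> b <= c -> c <= d -> f c <= f b.
Proof.
move=> H bc cd; elim: c bc cd => [|c IH] bc cd.
  by have -> : b = 0 by lia.
case: (ltngtP b c.+1) => [lt|gt|eq]; last by rewrite eq.
- apply: leq_trans (H c _ _) (IH _ _); lia.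
- lia.
Qed.

Lemma chain_up (f : nat -> nat) a b k :
  (forall i, i < k -> f i <= f i.+1) -> a <= b -> b <= k -> f a <= f b.
Proof.
move=> H ab bk; elim: b ab bk => [|b IH] ab bk.
  by have -> : a = 0 by lia.
case: (ltngtP a b.+1) => [lt|gt|eq]; last by rewrite eq.
- apply: leq_trans (IH _ _) (H b _); lia.
- lia.
Qed.

Lemma not_unimodal (f : nat -> nat) d a b c :
  a < b -> b < c -> c <= d -> f b < f a -> f b < f c -> ~ unimodal f d.
Proof.
move=> ab bc cd fab fcb [k [kd [Hu Hd]]].
case: (leqP k b) => kb.
- have := @chain_down f b c d (fun i hi => Hd i (leq_trans kb hi)) (ltnW bc) cd.
  lia.
- have := @chain_up f a b k Hu (ltnW ab) (ltnW kb). lia.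
Qed.

Theorem theorem3p6 (n m : nat) : 3 <= m -> m <= n ->
  exists d0 : nat, forall d : nat, d0 <= d -> ~ unimodal (hmax n m d) d.
Proof.
move=> m3 mn; exists (8 * m + 8) => d hd.
set h := d./2.
have hd2 : h.*2 <= d <= h.*2 + 1.
  rewrite /h; have := odd_double_half d; case: (odd d) => /= E; lia.
have hbig : 4 * m + 4 <= h by lia.
set j := h.-1.
have bg : perazzo_beta m d j <= perazzo_gamma n m j.
  rewrite /perazzo_beta /perazzo_gamma.
  set y := m + j - 2.
  have := @bin_step4 y (m - 1) ltac:(lia).
  have := @leq_bin2l (d + m - j - 1) (y + 4) (m - 1) ltac:(lia).
  move=> A B; apply: leq_trans A (leq_trans B _).
  by rewrite leq_mul2r; apply/orP; right; lia.
have low_j : hmax_low n m d j = perazzo_alpha m j + perazzo_beta m d j.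
  by rewrite /hmax_low; apply/minn_idPl; rewrite leq_add2l.
have dec : perazzo_alpha m j.+1 + perazzo_beta m d j.+1 <
           perazzo_alpha m j + perazzo_beta m d j.
  rewrite /perazzo_alpha /perazzo_beta.
  have EA : 'C(m + j.+1 - 1, m - 1) =
            'C(m + j - 1, m - 1) + 'C(m + j - 1, m - 2).
    have -> : m + j.+1 - 1 = (m + j - 1).+1 by lia.
    have -> : m - 1 = (m - 2).+1 by lia.
    by rewrite binS.
  have EB : 'C(d + m - j - 1, m - 1) =
            'C(d + m - j.+1 - 1, m - 1) + 'C(d + m - j.+1 - 1, m - 2).
    have -> : d + m - j - 1 = (d + m - j.+1 - 1).+1 by lia.
    have -> : m - 1 = (m - 2).+1 by lia.
    by rewrite binS.
  have L : 'C(m + j - 1, m - 2) < 'C(d + m - j.+1 - 1, m - 2).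
    apply: bin_lt; lia.
  rewrite EA EB; lia.
have low_b : hmax_low n m d j.+1 < hmax_low n m d j.
  rewrite low_j; apply: leq_trans dec.
  by rewrite ltnS /hmax_low geq_minl.
apply: (@not_unimodal _ d j j.+1 (d - j)); try lia.
- rewrite /hmax ifT; last lia. rewrite ifT; last lia. exact: low_b.
- rewrite /hmax ifT; last lia. rewrite ifF; last lia.
  by have -> : d - (d - j) = j by lia.
Qed.
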